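(* In $\varepsilon\tau(\mathbf{C})$, for every derivation $\pi$ and every critical formula $C(e)$ used in $\pi$ with critical term $e$, there is an $e$-elimination set for $\pi$ and $\{C(e)\}$.
   Context: $\mathbf{C}$ is classical propositional logic. $\varepsilon\tau$-terms: $\varepsilon x\,A(x)$, $\tau x\,A(x)$. Critical formulas: $A(t)\to A(\varepsilon x\,A(x))$ (critical term $\varepsilon x\,A(x)$) and $A(\tau x\,A(x))\to A(t)$ (critical term $\tau x\,A(x)$); a critical formula belongs to its critical term. A derivation $\pi$ of $D$ in $\varepsilon\tau(\mathbf{L})$ is a derivation in the quantifier-free language with $\varepsilon\tau$-terms from a finite set of critical formulas using substitution instances of theorems of $\mathbf{L}$ and modus ponens. Suppose the critical formulas of $\pi$ are $\Gamma\cup\Lambda(e)\cup\Lambda'(e)$, where $\Lambda(e)\cup\Lambda'(e)$ are all the critical formulas of $\pi$ belonging to $e$ and $\Gamma$ the rest, and write the end formula as $D(e)$. A set $\{s_1,\dots,s_k\}$ of terms is an $e$-elimination set for $\pi$ and $\Lambda(e)$ if $\Gamma[s_1/e],\dots,\Gamma[s_k/e],\Lambda'(e)\vdash_{\mathbf{L}}D(s_1)\lor\dots\lor D(s_k)$, where $[s/e]$ and $D(s)$ denote replacing every occurrence of $e$ by $s$, and $\vdash_{\mathbf{L}}$ is derivability from the listed assumptions by substitution instances of theorems of $\mathbf{L}$ and modus ponens. *)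

(* Defs.v *)
(* Quantifier-free first-order language with epsilon/tau terms,
   in locally nameless representation: free variables are names [Var x],
   bound variables are de Bruijn indices [BVar n]; [Eps A] / [Tau A] bind
   index 0 of the body [A].  Thus [Eps A] is  eps x A(x)  and  [fopen A t]
   is  A(t). *)
From Stdlib Require Import List ClassicalEpsilon.
Import ListNotations.

Inductive term : Type :=
  | Var  : nat -> term
  | BVar : nat -> term
  | Fn   : nat -> list term -> term
  | Eps  : form -> term
  | Tau  : form -> term
with form : Type :=
  | Atom : nat -> list term -> form
  | Bot  : form
  | Imp  : form -> form -> form
  | And  : form -> form -> form
  | Or   : form -> form -> form.

Fixpoint term_lc_at (k : nat) (u : term) : Prop :=
  match u with
  | Var _ => True
  | BVar n => n < k
  | Fn _ args => fold_right (fun a P => term_lc_at k a /\ P) True args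
  | Eps A => form_lc_at (S k) A
  | Tau A => form_lc_at (S k) A
  end
with form_lc_at (k : nat) (A : form) : Prop :=
  match A with
  | Atom _ args => fold_right (fun a P => term_lc_at k a /\ P) True args
  | Bot => True
  | Imp A B | And A B | Or A B => form_lc_at k A /\ form_lc_at k B
  end.

Definition term_lc (u : term) : Prop := term_lc_at 0 u.
Definition form_lc (A : form) : Prop := form_lc_at 0 A.

Fixpoint topen (k : nat) (t : term) (u : term) : term :=
  match u with
  | Var x => Var x
  | BVar n => if Nat.eqb n k then t else BVar n
  | Fn f args => Fn f (map (topen k t) args)
  | Eps A => Eps (fopen_at (S k) t A)
  | Tau A => Tau (fopen_at (S k) t A)
  end
with fopen_at (k : nat) (t : term) (A : form) : form :=
  match A with
  | Atom p args => Atom p (map (topen k t) args)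
  | Bot => Bot
  | Imp A B => Imp (fopen_at k t A) (fopen_at k t B)
  | And A B => And (fopen_at k t A) (fopen_at k t B)
  | Or A B => Or (fopen_at k t A) (fopen_at k t B)
  end.

Definition fopen (A : form) (t : term) : form := fopen_at 0 t A.

Fixpoint replT (s e : term) (u : term) : term :=
  if excluded_middle_informative (u = e) then s else
  match u with
  | Var x => Var x
  | BVar n => BVar n
  | Fn f args => Fn f (map (replT s e) args)
  | Eps A => Eps (replF s e A)
  | Tau A => Tau (replF s e A)
  end
with replF (s e : term) (A : form) : form :=
  match A with
  | Atom p args => Atom p (map (replT s e) args)
  | Bot => Bot
  | Imp A B => Imp (replF s e A) (replF s e B)
  | And A B => And (replF s e A) (replF s e B)
  | Or A B => Or (replF s e A) (replF s e B)
  end.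

Inductive crit : Type :=
  | CritEps : form -> term -> crit
  | CritTau : form -> term -> crit.

Definition critf (c : crit) : form :=
  match c with
  | CritEps A t => Imp (fopen A t) (fopen A (Eps A))
  | CritTau A t => Imp (fopen A (Tau A)) (fopen A t)
  end.

Definition crit_term (c : crit) : term :=
  match c with
  | CritEps A _ => Eps A
  | CritTau A _ => Tau A
  end.

Definition crit_wf (c : crit) : Prop :=
  match c with
  | CritEps A t | CritTau A t => form_lc_at 1 A /\ term_lc t
  end.

Inductive pform : Type :=
  | PVar : nat -> pform
  | PBot : pform
  | PImp : pform -> pform -> pform
  | PAnd : pform -> pform -> pform
  | POr  : pform -> pform -> pform.

Fixpoint peval (v : nat -> bool) (P : pform) : bool :=
  match P with
  | PVar n => v n
  | PBot => false
  | PImp P Q => implb (peval v P) (peval v Q)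
  | PAnd P Q => andb (peval v P) (peval v Q)
  | POr P Q => orb (peval v P) (peval v Q)
  end.

Definition C_logic (P : pform) : Prop := forall v, peval v P = true.

Fixpoint psubst (sg : nat -> form) (P : pform) : form :=
  match P with
  | PVar n => sg n
  | PBot => Bot
  | PImp P Q => Imp (psubst sg P) (psubst sg Q)
  | PAnd P Q => And (psubst sg P) (psubst sg Q)
  | POr P Q => Or (psubst sg P) (psubst sg Q)
  end.

Inductive Deriv (L : pform -> Prop) (Hyp : form -> Prop) : form -> Prop :=
  | d_hyp : forall A, Hyp A -> Deriv L Hyp A
  | d_ax  : forall P sg, L P -> form_lc (psubst sg P) -> Deriv L Hyp (psubst sg P)
  | d_mp  : forall A B, Deriv L Hyp A -> Deriv L Hyp (Imp A B) -> Deriv L Hyp B.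

Definition etDeriv (L : pform -> Prop) (Delta : list crit) (D : form) : Prop :=
  (forall c, In c Delta -> crit_wf c) /\
  Deriv L (fun phi => exists c, In c Delta /\ phi = critf c) D.

Fixpoint big_or (l : list form) : form :=
  match l with
  | [] => Bot
  | [d] => d
  | d :: ds => Or d (big_or ds)
  end.

(** Gamma = critical formulas of Delta not belonging to e,
    Lam' = those belonging to e that are not in Lam. *)
Definition elim_set (L : pform -> Prop) (Delta : list crit) (D : form) (e : term)
    (Lam : form -> Prop) (ss : list term) : Prop :=
  ss <> [] /\ Forall term_lc ss /\
  Deriv L
    (fun phi =>
       (exists s c, In s ss /\ In c Delta /\ crit_term c <> e /\
                    phi = replF s e (critf c))
       \/ (exists c, In c Delta /\ crit_term c = e /\ ~ Lam (critf c) /\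
                     phi = critf c))
    (big_or (map (fun s => replF s e D) ss)).

(* Main.v *)
Require Import Defs.
From Stdlib Require Import List Arith Lia Classical ClassicalEpsilon Bool.
Import ListNotations.

Definition tf_ind (P : term -> Prop) (Q : form -> Prop)
  (HVar : forall x, P (Var x)) (HBVar : forall n, P (BVar n))
  (HFn : forall f args, Forall P args -> P (Fn f args))
  (HEps : forall A, Q A -> P (Eps A)) (HTau : forall A, Q A -> P (Tau A))
  (HAtom : forall p args, Forall P args -> Q (Atom p args))
  (HBot : Q Bot)
  (HImp : forall A B, Q A -> Q B -> Q (Imp A B))
  (HAnd : forall A B, Q A -> Q B -> Q (And A B))
  (HOr : forall A B, Q A -> Q B -> Q (Or A B)) :
  (forall u, P u) /\ (forall A, Q A) :=
  let tind := fix tind (u : term) : P u :=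
    match u with
    | Var x => HVar x
    | BVar n => HBVar n
    | Fn f args => HFn f args ((fix go (l : list term) : Forall P l :=
         match l with [] => Forall_nil _ | a :: l' => Forall_cons _ (tind a) (go l') end) args)
    | Eps A => HEps A (find A)
    | Tau A => HTau A (find A)
    end
  with find (A : form) : Q A :=
    match A with
    | Atom p args => HAtom p args ((fix go (l : list term) : Forall P l :=
         match l with [] => Forall_nil _ | a :: l' => Forall_cons _ (tind a) (go l') end) args)
    | Bot => HBot
    | Imp A B => HImp A B (find A) (find B)
    | And A B => HAnd A B (find A) (find B)
    | Or A B => HOr A B (find A) (find B)
    end
  for tind in
  conj tind (fix find (A : form) : Q A :=
    match A with
    | Atom p args => HAtom p args ((fix go (l : list term) : Forall P l :=
         match l with [] => Forall_nil _ | a :: l' => Forall_cons _ (tind a) (go l') end) args)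
    | Bot => HBot
    | Imp A B => HImp A B (find A) (find B)
    | And A B => HAnd A B (find A) (find B)
    | Or A B => HOr A B (find A) (find B)
    end).

Lemma map_Forall_id {T} (f : T -> T) l : Forall (fun a => f a = a) l -> map f l = l.
Proof. induction 1; simpl; congruence. Qed.

Lemma repl_id (e : term) :
  (forall u, replT e e u = u) /\ (forall A, replF e e A = A).
Proof.
  apply tf_ind; intros; simpl;
  try (destruct (excluded_middle_informative _) as [Hq|Hq]; [now subst|]);
  try reflexivity; try congruence.
  all: f_equal; apply map_Forall_id; assumption.
Qed.
Fixpoint tsize (u : term) : nat :=
  match u with
  | Var _ | BVar _ => 1
  | Fn _ args => S (fold_right (fun a n => tsize a + n) 0 args)
  | Eps A | Tau A => S (fsize A)
  end
with fsize (A : form) : nat :=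
  match A with
  | Atom _ args => S (fold_right (fun a n => tsize a + n) 0 args)
  | Bot => 1
  | Imp A B | And A B | Or A B => S (fsize A + fsize B)
  end.

Lemma in_size a args : In a args -> tsize a <= fold_right (fun a n => tsize a + n) 0 args.
Proof. induction args as [|b args IH]; simpl; [tauto|]. intros [H|H]; [subst; lia| specialize (IH H); lia]. Qed.

Lemma L_list k s args :
  Forall (fun u => forall k s, topen k s u = u \/ tsize s <= tsize (topen k s u)) args ->
  map (topen k s) args = args \/
  tsize s <= fold_right (fun a n => tsize a + n) 0 (map (topen k s) args).
Proof.
  induction 1; simpl; [now left|].
  destruct (H k s) as [E|E]; destruct IHForall as [E'|E']; try (right; lia).
  left; congruence.
Qed.

Lemma Lsize :
  (forall u k s, topen k s u = u \/ tsize s <= tsize (topen k s u)) /\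
  (forall B k s, fopen_at k s B = B \/ tsize s <= fsize (fopen_at k s B)).
Proof.
  apply tf_ind; intros; simpl.
  - now left.
  - destruct (Nat.eqb n k); [right; lia | now left].
  - destruct (L_list k s args H) as [E|E]; [left; congruence| right; simpl; lia].
  - destruct (H (S k) s) as [E|E]; [left; congruence| right; simpl; lia].
  - destruct (H (S k) s) as [E|E]; [left; congruence| right; simpl; lia].
  - destruct (L_list k s args H) as [E|E]; [left; congruence| right; simpl; lia].
  - now left.
  - destruct (H k s) as [E|E]; destruct (H0 k s) as [E'|E']; try (right; simpl; lia); left; congruence.
  - destruct (H k s) as [E|E]; destruct (H0 k s) as [E'|E']; try (right; simpl; lia); left; congruence.
  - destruct (H k s) as [E|E]; destruct (H0 k s) as [E'|E']; try (right; simpl; lia); left; congruence.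
Qed.

Lemma repl_self t e : replT t e e = t.
Proof. destruct e; simpl; destruct (excluded_middle_informative _); congruence. Qed.

Definition is_binder (e : term) : Prop :=
  match e with Eps _ | Tau _ => True | _ => False end.

Lemma key_list (e t : term) k args :
  Forall (fun u => forall k, tsize u < tsize e -> replT t e (topen k e u) = topen k t u) args ->
  S (fold_right (fun a n => tsize a + n) 0 args) < tsize e ->
  map (replT t e) (map (topen k e) args) = map (topen k t) args.
Proof.
  intros HF Hs. rewrite map_map. apply map_ext_in. intros a Ha.
  rewrite Forall_forall in HF. apply HF; auto.
  pose proof (in_size a args Ha); lia.
Qed.

Lemma key (e t : term) (He : is_binder e) :
  (forall u k, tsize u < tsize e -> replT t e (topen k e u) = topen k t u) /\
  (forall B k, fsize B < tsize e -> replF t e (fopen_at k e B) = fopen_at k t B).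
Proof.
  apply tf_ind; intros; simpl.
  - destruct (excluded_middle_informative _); [exfalso; match goal with E : _ = e |- _ => rewrite <- E in He end; exact He|reflexivity].
  - destruct (Nat.eqb n k); [apply repl_self|].
    simpl; destruct (excluded_middle_informative _); [exfalso; match goal with E : _ = e |- _ => rewrite <- E in He end; exact He|reflexivity].
  - destruct (excluded_middle_informative _); [exfalso; match goal with E : _ = e |- _ => rewrite <- E in He end; exact He|].
    f_equal. apply key_list; auto.
  - destruct (excluded_middle_informative _) as [E|E].
    + exfalso. destruct (proj2 Lsize A (S k) e) as [E'|E'].
      * rewrite E' in E. subst. simpl in H0. lia.
      * assert (tsize e = S (fsize (fopen_at (S k) e A))) by (rewrite <- E at 1; reflexivity). lia.
    + f_equal. apply H. simpl in H0. lia.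
  - destruct (excluded_middle_informative _) as [E|E].
    + exfalso. destruct (proj2 Lsize A (S k) e) as [E'|E'].
      * rewrite E' in E. subst. simpl in H0. lia.
      * assert (tsize e = S (fsize (fopen_at (S k) e A))) by (rewrite <- E at 1; reflexivity). lia.
    + f_equal. apply H. simpl in H0. lia.
  - f_equal. apply key_list; auto.
  - reflexivity.
  - simpl in H1. rewrite H, H0 by lia. reflexivity.
  - simpl in H1. rewrite H, H0 by lia. reflexivity.
  - simpl in H1. rewrite H, H0 by lia. reflexivity.
Qed.

Lemma key_open (A : form) (t : term) :
  replF t (Eps A) (fopen A (Eps A)) = fopen A t /\
  replF t (Tau A) (fopen A (Tau A)) = fopen A t.
Proof.
  split; [apply (proj2 (key (Eps A) t I))|apply (proj2 (key (Tau A) t I))]; simpl; lia.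
Qed.

Lemma fr_forall k args :
  fold_right (fun a P => term_lc_at k a /\ P) True args <-> Forall (term_lc_at k) args.
Proof.
  induction args; simpl; split; intros H; auto.
  - destruct H; constructor; tauto.
  - inversion H; subst; tauto.
Qed.

Lemma Forall_comb {T} (P Q R : T -> Prop) l :
  Forall P l -> Forall Q l -> (forall x, P x -> Q x -> R x) -> Forall R l.
Proof. induction 1 as [|x l Px Pl IH]; intros HQ HR; inversion HQ; subst; constructor; auto. Qed.

Lemma lc_mono :
  (forall u k, term_lc_at k u -> forall k', k <= k' -> term_lc_at k' u) /\
  (forall A k, form_lc_at k A -> forall k', k <= k' -> form_lc_at k' A).
Proof.
  apply tf_ind; intros; simpl in *; auto; try lia; try (apply (H (S k)); auto; lia).
  - apply fr_forall. apply fr_forall in H0.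
    apply (Forall_comb _ _ _ _ H H0). intros; eauto.
  - apply fr_forall. apply fr_forall in H0.
    apply (Forall_comb _ _ _ _ H H0). intros; eauto.
  - destruct H1; split; eauto.
  - destruct H1; split; eauto.
  - destruct H1; split; eauto.
Qed.

Lemma lc0 s k : term_lc s -> term_lc_at k s.
Proof. intros H; apply (proj1 lc_mono s 0 H); lia. Qed.

Lemma repl_lc s e : term_lc s ->
  (forall u k, term_lc_at k u -> term_lc_at k (replT s e u)) /\
  (forall A k, form_lc_at k A -> form_lc_at k (replF s e A)).
Proof.
  intro Hs.
  apply tf_ind; intros; simpl in *;
  try (destruct (excluded_middle_informative _); [apply lc0; auto|]); simpl; auto.
  - apply fr_forall. apply fr_forall in H0. apply Forall_map.
    apply (Forall_comb _ _ _ _ H H0). intros; eauto.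
  - apply fr_forall. apply fr_forall in H0. apply Forall_map.
    apply (Forall_comb _ _ _ _ H H0). intros; eauto.
  - destruct H1; split; eauto.
  - destruct H1; split; eauto.
  - destruct H1; split; eauto.
Qed.

Lemma open_lc t : term_lc t ->
  (forall u k, term_lc_at (S k) u -> term_lc_at k (topen k t u)) /\
  (forall A k, form_lc_at (S k) A -> form_lc_at k (fopen_at k t A)).
Proof.
  intro Ht.
  apply tf_ind; intros; simpl in *; auto.
  - destruct (Nat.eqb_spec n k); [apply lc0; auto|simpl; lia].
  - apply fr_forall. apply fr_forall in H0. apply Forall_map.
    apply (Forall_comb _ _ _ _ H H0). intros; eauto.
  - apply fr_forall. apply fr_forall in H0. apply Forall_map.
    apply (Forall_comb _ _ _ _ H H0). intros; eauto.
  - destruct H1; split; eauto.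
  - destruct H1; split; eauto.
  - destruct H1; split; eauto.
Qed.

Lemma critf_lc c : crit_wf c -> form_lc (critf c).
Proof.
  destruct c as [A t|A t]; simpl; intros [HA Ht]; split;
  unfold fopen; [apply (proj2 (open_lc t Ht))|apply (proj2 (open_lc (Eps A) HA))
   |apply (proj2 (open_lc (Tau A) HA))|apply (proj2 (open_lc t Ht))]; auto.
Qed.

Fixpoint feval (w : form -> bool) (A : form) : bool :=
  match A with
  | Atom p args => w (Atom p args)
  | Bot => false
  | Imp A B => implb (feval w A) (feval w B)
  | And A B => andb (feval w A) (feval w B)
  | Or A B => orb (feval w A) (feval w B)
  end.

Lemma feval_psubst w sg P : feval w (psubst sg P) = peval (fun n => feval w (sg n)) P.
Proof. induction P; simpl; congruence. Qed.

Lemma sound Hyp A : Deriv C_logic Hyp A ->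
  forall w, (forall h, Hyp h -> feval w h = true) -> feval w A = true.
Proof.
  induction 1; intros w Hw; auto.
  - rewrite feval_psubst. apply H.
  - specialize (IHDeriv1 w Hw). specialize (IHDeriv2 w Hw). simpl in IHDeriv2.
    rewrite IHDeriv1 in IHDeriv2. exact IHDeriv2.
Qed.

Lemma feval_repl w s e A : feval w (replF s e A) = feval (fun a => w (replF s e a)) A.
Proof. induction A; simpl; congruence. Qed.

Fixpoint pos (a : form) (l : list form) : nat :=
  match l with
  | [] => 0
  | b :: l' => if excluded_middle_informative (a = b) then 0 else S (pos a l')
  end.

Lemma pos_nth a l : In a l -> nth (pos a l) l Bot = a.
Proof.
  induction l; simpl; [tauto|]. intros [H|H];
  destruct (excluded_middle_informative _); subst; auto; congruence.
Qed.

Fixpoint atoms (A : form) : list form :=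
  match A with
  | Atom p args => [Atom p args]
  | Bot => []
  | Imp A B | And A B | Or A B => atoms A ++ atoms B
  end.

Fixpoint abs (l : list form) (A : form) : pform :=
  match A with
  | Atom p args => PVar (pos (Atom p args) l)
  | Bot => PBot
  | Imp A B => PImp (abs l A) (abs l B)
  | And A B => PAnd (abs l A) (abs l B)
  | Or A B => POr (abs l A) (abs l B)
  end.

Lemma psubst_abs l A : incl (atoms A) l -> psubst (fun n => nth n l Bot) (abs l A) = A.
Proof.
  induction A; simpl; intros H; auto.
  - apply pos_nth. apply H. simpl; auto.
  - apply incl_app_inv in H as [H1 H2]. rewrite IHA1, IHA2; auto.
  - apply incl_app_inv in H as [H1 H2]. rewrite IHA1, IHA2; auto.
  - apply incl_app_inv in H as [H1 H2]. rewrite IHA1, IHA2; auto.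
Qed.

Lemma peval_abs v l A : peval v (abs l A) = feval (fun a => v (pos a l)) A.
Proof. induction A; simpl; congruence. Qed.

Lemma feval_fold w hs phi :
  ((forall h, In h hs -> feval w h = true) -> feval w phi = true) ->
  feval w (fold_right Imp phi hs) = true.
Proof.
  induction hs as [|a hs IH]; simpl; intros H.
  - apply H; intros; contradiction.
  - destruct (feval w a) eqn:Ea; simpl; auto.
    apply IH. intros Hh. apply H. intros h [<-|Hin]; auto.
Qed.

Lemma lc_fold hs phi : (forall h, In h hs -> form_lc h) -> form_lc phi ->
  form_lc (fold_right Imp phi hs).
Proof.
  induction hs; simpl; intros; auto. split; [apply H; auto| apply IHhs; auto].
Qed.

Lemma mp_fold L Hyp hs phi : Deriv L Hyp (fold_right Imp phi hs) ->
  (forall h, In h hs -> Deriv L Hyp h) -> Deriv L Hyp phi.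
Proof.
  induction hs as [|a hs IH]; simpl; intros H Hh; auto.
  apply IH; [eapply d_mp; [apply Hh; left; auto | exact H] | intros; apply Hh; right; auto].
Qed.

Lemma complete Hyp hs phi :
  (forall h, In h hs -> Hyp h /\ form_lc h) -> form_lc phi ->
  (forall w, (forall h, In h hs -> feval w h = true) -> feval w phi = true) ->
  Deriv C_logic Hyp phi.
Proof.
  intros Hh Hphi Hsem.
  apply (mp_fold _ _ hs).
  - set (Phi := fold_right Imp phi hs).
    rewrite <- (psubst_abs (atoms Phi) Phi (incl_refl _)).
    apply d_ax.
    + intro v. rewrite peval_abs. apply feval_fold. apply Hsem.
    + rewrite psubst_abs by apply incl_refl. apply lc_fold; auto.
      intros h H; apply Hh; auto.
  - intros h H; apply d_hyp, Hh; auto.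
Qed.

Lemma deriv_lc L Hyp A : (forall h, Hyp h -> form_lc h) -> Deriv L Hyp A -> form_lc A.
Proof.
  intros Hh; induction 1; auto. simpl in IHDeriv2. unfold form_lc in *; simpl in *. tauto.
Qed.

Definition crit_arg (c : crit) : term :=
  match c with CritEps _ t | CritTau _ t => t end.

Theorem mainTheorem13 (Delta : list crit) (D : form) (C0 : crit) :
  etDeriv C_logic Delta D -> In C0 Delta ->
  exists ss : list term,
    elim_set C_logic Delta D (crit_term C0) (fun phi => phi = critf C0) ss.
Proof.
  intros [Hwf HD] HC0.
  set (e := crit_term C0). set (t0 := crit_arg C0).
  assert (He : term_lc e /\ term_lc t0).
  { pose proof (Hwf C0 HC0) as HW; subst e t0; destruct C0; simpl in *; destruct HW; auto. }
  destruct He as [Hel Htl].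
  exists [e; t0]. split; [discriminate|]. split; [repeat constructor; auto|].
  simpl.
  set (hs := flat_map (fun c =>
      if excluded_middle_informative (crit_term c = e) then
        (if excluded_middle_informative (critf c = critf C0) then [] else [critf c])
      else [replF e e (critf c); replF t0 e (critf c)]) Delta).
  assert (HDlc : form_lc D).
  { eapply deriv_lc; [|exact HD]. intros h [c [Hc ->]]; apply critf_lc, Hwf; auto. }
  apply (complete _ hs).
  - intros h Hh. apply in_flat_map in Hh as [c [Hc Hh]].
    destruct (excluded_middle_informative (crit_term c = e)) as [E|E].
    + destruct (excluded_middle_informative (critf c = critf C0)) as [E'|E'];
        simpl in Hh; [contradiction|]. destruct Hh as [<-|[]].
      split; [right; exists c; auto| apply critf_lc, Hwf; auto].
    + simpl in Hh. destruct Hh as [<-|[<-|[]]].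
      * split; [left; exists e, c; simpl; auto|].
        apply (proj2 (repl_lc _ _ Hel)), critf_lc, Hwf; auto.
      * split; [left; exists t0, c; simpl; auto|].
        apply (proj2 (repl_lc _ _ Htl)), critf_lc, Hwf; auto.
  - split; [apply (proj2 (repl_lc _ _ Hel))|apply (proj2 (repl_lc _ _ Htl))]; auto.
  - intros w Hw. simpl.
    assert (Hin : forall c h, In c Delta -> In h (if excluded_middle_informative (crit_term c = e) then
        (if excluded_middle_informative (critf c = critf C0) then [] else [critf c])
      else [replF e e (critf c); replF t0 e (critf c)]) -> feval w h = true).
    { intros c h Hc Hh. apply Hw. apply in_flat_map. exists c; auto. }
    destruct (feval w (critf C0)) eqn:EC.
    + rewrite (proj2 (repl_id e)).
      rewrite (sound _ _ HD w); auto.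
      intros h [c [Hc ->]].
      specialize (Hin c). 
      destruct (excluded_middle_informative (crit_term c = e)) as [E|E].
      * destruct (excluded_middle_informative (critf c = critf C0)) as [E'|E'].
        -- rewrite E'; auto.
        -- apply Hin; simpl; auto.
      * rewrite <- (proj2 (repl_id e) (critf c)). apply Hin; simpl; auto.
    + rewrite (feval_repl w t0 e D). rewrite (sound _ _ HD (fun a => w (replF t0 e a))); [apply orb_true_r|].
      intros h [c [Hc ->]]. rewrite <- feval_repl.
      specialize (Hin c).
      destruct (excluded_middle_informative (crit_term c = e)) as [E|E].
      * clear Hin. subst e t0.
        destruct C0 as [A t|A t]; destruct c as [A' t'|A' t']; simpl in E; try discriminate;
          injection E as ->; simpl in EC |- *.
        -- rewrite (proj1 (key_open A t)).
           simpl in EC. apply implb_false_iff in EC. destruct EC as [-> _].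
           apply implb_true_r.
        -- rewrite (proj2 (key_open A t)).
           apply implb_false_iff in EC. destruct EC as [_ ->]. reflexivity.
      * apply Hin; simpl; auto.
Qed.
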